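(* Let $n\ge2$, $\gamma\in\mathbb{R}$, $l,u\in\mathbb{R}^n$ with $l\le u$, and $\mathcal{X}=\{x\in\mathbb{R}^n:\sum_m x_m=\gamma,\ l_m\le x_m\le u_m\ \forall m\}\neq\emptyset$. Let $f:\mathbb{R}^n\to\mathbb{R}$ be differentiable and assume there is $L_2>0$ such that for all $x\in\mathcal{X}$, all $i\neq j$ and all $d$ with $d_i=-d_j$, $d_m=0$ for $m\notin\{i,j\}$ and $x+d\in\mathcal{X}$, $\|\nabla_{ij}f(x+d)-\nabla_{ij}f(x)\|_2\le L_2\|d\|_2$. Let $f^*=\inf_{\mathcal{X}}f$ and assume there is $\mu_2>0$ with \[ -L_2\min_{y\in\mathcal{X}}\Big\{\nabla f(x)^\top(y-x)+\tfrac{L_2}{2}\|y-x\|_2^2\Big\}\ge\mu_2(f(x)-f^* )\quad\text{for all }x\in\mathcal{X}. \] Let $x^0\in\mathcal{X}$ and $x^{k+1}=x^k+d^k$, where $(i_k,j_k,d^k)$ minimizes $\nabla f(x^k)^\top d+\frac{L_2}{2}\|d\|_2^2$ over all pairs $i\neq j$ and all $d$ with $d_i+d_j=0$, $d_m=0$ for $m\notin\{i,j\}$, and $x^k+d\in\mathcal{X}$ (the GS-q rule with step size $1/L_2$). Then for all $k\ge0$, \[ f(x^k)-f^*\le\Big(1-\frac{\mu_2}{L_2(n-1)}\Big)^k\big(f(x^0)-f^*\big). \]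
   Context: $\nabla_{ij}f(x)=(\nabla_if(x),\nabla_jf(x))\in\mathbb{R}^2$. The assumption on $\mu_2$ is the proximal-PL inequality in the 2-norm on the feasible set $\mathcal{X}$. *)

(* Defs.v *)
From HB Require Import structures.
From mathcomp Require Import all_boot all_order all_algebra.
From mathcomp Require Import all_classical all_reals all_analysis.
Set Implicit Arguments. Unset Strict Implicit. Unset Printing Implicit Defensive.
Import Order.TTheory GRing.Theory Num.Theory.
Import numFieldNormedType.Exports.
Local Open Scope classical_set_scope.
Local Open Scope ring_scope.

Definition norm2 {R : realType} {n : nat} (v : 'rV[R]_n) : R :=
  Num.sqrt (\sum_(m < n) v 0 m ^+ 2).

Definition dotv {R : realType} {n : nat} (v w : 'rV[R]_n) : R :=
  \sum_(m < n) v 0 m * w 0 m.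

Definition feasible {R : realType} {n : nat} (gamma : R) (l u : 'rV[R]_n) :
  set 'rV[R]_n :=
  [set x | \sum_(m < n) x 0 m = gamma /\ forall m, l 0 m <= x 0 m <= u 0 m].

Definition grad {R : realType} {n : nat} (f : 'rV[R]_n -> R) (x : 'rV[R]_n) :
  'rV[R]_n := \row_(i < n) ('d f x (delta_mx 0 i : 'rV[R]_n)).

Definition grad_ij {R : realType} {n : nat} (f : 'rV[R]_n -> R)
  (x : 'rV[R]_n) (i j : 'I_n) : 'rV[R]_2 :=
  \row_(k < 2) (if k == ord0 then grad f x 0 i else grad f x 0 j).

Definition pair_dir {R : realType} {n : nat} (i j : 'I_n) (d : 'rV[R]_n) : Prop :=
  i != j /\ d 0 i + d 0 j = 0 /\ forall m, m != i -> m != j -> d 0 m = 0.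

Definition qmodel {R : realType} {n : nat} (f : 'rV[R]_n -> R) (L : R)
  (x d : 'rV[R]_n) : R :=
  dotv (grad f x) d + L / 2 * norm2 d ^+ 2.

(* Main.v *)
Require Import Defs.
From HB Require Import structures.
From mathcomp Require Import all_boot all_order all_algebra.
From mathcomp Require Import all_classical all_reals all_analysis.
From mathcomp Require Import ring lra.
Import Order.TTheory GRing.Theory Num.Theory.
Import numFieldNormedType.Exports.
Local Open Scope classical_set_scope.
Local Open Scope ring_scope.
Section Decomp.
Variables (R : realType) (n : nat).

Definition sq (d : 'rV[R]_n) : R := \sum_(m < n) d 0 m ^+ 2.
Definition betw (a b : R) : Prop := (0 <= a <= b) \/ (b <= a <= 0).

Lemma sum_pair (F : 'I_n -> R) (i j : 'I_n) : i != j ->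
  (forall m, m != i -> m != j -> F m = 0) -> \sum_m F m = F i + F j.
Proof.
move=> ij H; rewrite (bigD1 i) //= (bigD1 j) 1?eq_sym //= big1 ?addr0 //.
by move=> m /andP[mi mj]; apply: H.
Qed.

Lemma exists_pos (D : 'rV[R]_n) : \sum_m D 0 m = 0 -> D != 0 ->
  exists i j, [/\ 0 < D 0 i, D 0 j < 0 & i != j].
Proof.
move=> s0 D0.
have Hp : exists i, 0 < D 0 i.
  have [//|H] := pselect (exists i, 0 < D 0 i).
  exfalso; move/eqP: D0; apply; apply/rowP => m.
  have H1 : forall m, true -> 0 <= - D 0 m by move=> k _; rewrite oppr_ge0 leNgt; apply/negP => h; apply: H; exists k.
  have := psumr_eq0P H1; rewrite sumrN s0 oppr0 => /(_ erefl m erefl).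
  by rewrite mxE => /eqP; rewrite oppr_eq0 => /eqP.
have Hn : exists j, D 0 j < 0.
  have [//|H] := pselect (exists j, D 0 j < 0).
  exfalso; move/eqP: D0; apply; apply/rowP => m.
  have H1 : forall m, true -> 0 <= D 0 m by move=> k _; rewrite leNgt; apply/negP => h; apply: H; exists k.
  have := psumr_eq0P H1 s0 => /(_ m erefl).
  by rewrite mxE.
case: Hp => i Hi; case: Hn => j Hj; exists i, j; split => //.
by apply/eqP => ij; move: Hi; rewrite ij => /(lt_trans Hj); rewrite ltxx.
Qed.

Lemma decomp (g D0 : 'rV[R]_n) (L Q : R) (hL : 0 <= L) (hQ0 : Q <= 0)
  (hQ : forall i j d, pair_dir i j d -> (forall m, betw (d 0 m) (D0 0 m)) ->
        Q <= dotv g d + L / 2 * sq d) :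
  forall N (D : 'rV[R]_n), leq #|[pred m | D 0 m != 0]| N.+1 ->
  \sum_m D 0 m = 0 -> (forall m, betw (D 0 m) (D0 0 m)) ->
  N%:R * Q <= dotv g D + L / 2 * sq D.
Proof.
have e1 : dotv g 0 = 0 by rewrite /dotv big1 // => m _; rewrite mxE mulr0.
have e2 : sq 0 = 0 by rewrite /sq big1 // => m _; rewrite mxE expr0n.
elim=> [|N IH] D hc hs hb.
- have [->|DN0] := eqVneq D 0.
    by rewrite e1 e2 mulr0 addr0 mul0r.
  have [i [j [hi hj ij]]] := exists_pos _ hs DN0.
  have : leq 2 #|[pred m | D 0 m != 0]|.
    apply/card_gt1P; exists i, j; rewrite !inE; split => //.
    - by rewrite gt_eqF. - by rewrite lt_eqF.
  by rewrite ltnNge hc.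
- have [->|DN0] := eqVneq D 0.
    by rewrite e1 e2 mulr0 addr0 mulr_ge0_le0 // ler0n.
  have [i [j [hi hj ij]]] := exists_pos _ hs DN0.
  have [a [a0 ai aj aeq]] : exists a, [/\ 0 < a, a <= D 0 i, a <= - D 0 j &
      (a = D 0 i \/ a = - D 0 j)].
    have [le|lt] := leP (D 0 i) (- D 0 j).
    - by exists (D 0 i); split; [lra|lra|lra|left].
    - by exists (- D 0 j); split; [lra|lra|lra|right].
  pose d := \row_(m < n) (if m == i then a else if m == j then - a else 0) : 'rV[R]_n.
  have dE m : d 0 m = (if m == i then a else if m == j then - a else 0) by rewrite mxE.
  have di : d 0 i = a by rewrite dE eqxx.
  have dj : d 0 j = - a by rewrite dE eq_sym (negbTE ij) eqxx.
  have dm m : m != i -> m != j -> d 0 m = 0 by move=> /negbTE h1 /negbTE h2; rewrite dE h1 h2.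
  have pd : pair_dir i j d by split => //; split => //; rewrite di dj; lra.
  pose D' := D - d.
  have D'E m : D' 0 m = D 0 m - d 0 m by rewrite !mxE.
  have hQd := hQ i j d pd.
  have bi := hb i; have bj := hb j.
  have hQd' : Q <= dotv g d + L / 2 * sq d.
    apply: hQd => m.
    have [->|mi] := eqVneq m i; first by rewrite di /betw; left; case: bi; lra.
    have [->|mj] := eqVneq m j; first by rewrite dj /betw; right; case: bj; lra.
    rewrite dm // /betw; case: (leP 0 (D0 0 m)) => h; [left|right]; lra.
  have hIH : N%:R * Q <= dotv g D' + L / 2 * sq D'.
    apply: IH.
    - have : leq (#|[pred m | D' 0 m != 0]|).+1 #|[pred m | D 0 m != 0]|.
        apply: proper_card; apply/properP; split.
          apply/fintype.subsetP => m; rewrite !inE D'E.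
          have [->|mi] := eqVneq m i; first by move=> _; rewrite gt_eqF.
          have [->|mj] := eqVneq m j; first by move=> _; rewrite lt_eqF.
          by rewrite dm // subr0.
        case: aeq => ae.
        + by exists i; rewrite !inE ?D'E ?di ?ae ?subrr ?eqxx // gt_eqF.
        + by exists j; rewrite !inE ?D'E ?dj ?ae ?opprK ?subrr ?eqxx ?addrN // lt_eqF.
      move=> h; rewrite -ltnS; exact: leq_trans h hc.
    - have -> : \sum_m D' 0 m = \sum_m D 0 m - \sum_m d 0 m.
        by rewrite -sumrB; apply: eq_bigr => m _; rewrite D'E.
      rewrite hs (@sum_pair (d 0) i j ij) ?di ?dj; first lra.
      by move=> m h1 h2; rewrite dm.
    - move=> m; rewrite D'E.
      have [->|mi] := eqVneq m i; first by rewrite di /betw; left; case: bi; lra.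
      have [->|mj] := eqVneq m j; first by rewrite dj /betw; right; case: bj; lra.
      by rewrite dm // subr0.
  have hdot : dotv g D = dotv g D' + dotv g d.
    rewrite /dotv -big_split /=; apply: eq_bigr => m _; rewrite D'E; ring.
  have hsq : sq D' + sq d <= sq D.
    rewrite /sq -big_split /=; apply: ler_sum => m _; rewrite D'E.
    have [->|mi] := eqVneq m i; first by rewrite di; nra.
    have [->|mj] := eqVneq m j; first by rewrite dj; nra.
    by rewrite dm // subr0 expr0n /= addr0.
  rewrite -natr1 mulrDl mul1r hdot.
  have : L / 2 * (sq D' + sq d) <= L / 2 * sq D.
    by apply: ler_wpM2l => //; apply: divr_ge0.
  lra.
Qed.
End Decomp.
Arguments sq {R n} d.
Arguments betw {R} a b.
Arguments sum_pair {R n} F i j.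
Section Deriv.
Variables (R : realType) (n : nat).

Lemma line_derive (f : 'rV[R]_n -> R) (hf : forall x, differentiable f x) (x d : 'rV[R]_n) (t : R) :
  is_derive t 1 (fun s : R => f (s *: d + x)) ('d f (t *: d + x) d).
Proof.
have hh : forall s : R, is_diff s (fun s : R => s *: d + x) (fun s : R => s *: d).
  move=> s.
  have := @is_diffD R R^o _ (fun s : R => s *: d) (fun _ => x) (fun s : R => s *: d) 0 s _ _.
  move=> /(_ (is_diff_scalel _ _) (is_diff_cst _ _)); rewrite addr0; exact.
have hc : differentiable (f \o (fun s : R => s *: d + x)) t.
  by apply: differentiable_comp => //.
apply: DeriveDef; first exact/derivable1_diffP.
rewrite deriveE // diff_comp //=. 
by rewrite diff_val scale1r.
Qed.
End Deriv.
Arguments line_derive {R n} f hf x d t.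
Section Descent.
Context {R : realType} {n : nat}.

Lemma sq_ge0 (d : 'rV[R]_n) : 0 <= sq d.
Proof. by apply: sumr_ge0 => m _; apply: sqr_ge0. Qed.

Lemma norm2_sq (d : 'rV[R]_n) : norm2 d ^+ 2 = sq d.
Proof. by rewrite /norm2 sqr_sqrtr // sq_ge0. Qed.

Lemma norm2E (d : 'rV[R]_n) : norm2 d = Num.sqrt (sq d).
Proof. by []. Qed.

Lemma norm2Z (c : R) (d : 'rV[R]_n) : 0 <= c -> norm2 (c *: d) = c * norm2 d.
Proof.
move=> c0; rewrite !norm2E.
have -> : sq (c *: d) = c ^+ 2 * sq d.
  by rewrite /sq mulr_sumr; apply: eq_bigr => m _; rewrite mxE exprMn.
by rewrite sqrtrM ?sqr_ge0 // sqrtr_sqr ger0_norm.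
Qed.

Lemma CS2 (a1 a2 b1 b2 : R) :
  a1 * b1 + a2 * b2 <= Num.sqrt (a1 ^+ 2 + a2 ^+ 2) * Num.sqrt (b1 ^+ 2 + b2 ^+ 2).
Proof.
rewrite -sqrtrM; last by rewrite addr_ge0 // sqr_ge0.
have [h|h] := leP (a1 * b1 + a2 * b2) 0; first by apply: le_trans h _.
rewrite -(ger0_norm (ltW h)) -sqrtr_sqr ler_sqrt; last first.
  by rewrite mulr_ge0 // addr_ge0 // sqr_ge0.
have := sqr_ge0 (a1 * b2 - a2 * b1); nra.
Qed.

Lemma feas_conv gamma (l u x y : 'rV[R]_n) (c : R) :
  feasible gamma l u x -> feasible gamma l u y -> 0 <= c <= 1 ->
  feasible gamma l u (x + c *: (y - x)).
Proof.
move=> [sx bx] [sy byy] /andP[c0 c1]; split.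
  have -> : \sum_m (x + c *: (y - x)) 0 m = \sum_m x 0 m + c * (\sum_m y 0 m - \sum_m x 0 m).
    rewrite -sumrB mulr_sumr -big_split; apply: eq_bigr => m _; by rewrite !mxE.
  by rewrite sx sy subrr mulr0 addr0.
move=> m; rewrite !mxE; have /andP[h1 h2] := bx m; have /andP[h3 h4] := byy m.
apply/andP; split; nra.
Qed.

Lemma pair_decomp (i j : 'I_n) (d : 'rV[R]_n) : pair_dir i j d ->
  d = d 0 i *: delta_mx 0 i + d 0 j *: delta_mx 0 j.
Proof.
move=> [ij [s dm]]; apply/rowP => m; rewrite !mxE /=.
have [->|mi] := eqVneq m i; first by rewrite (negbTE ij) /= mulr1 mulr0 addr0.
have [->|mj] := eqVneq m j; first by rewrite ?mulr0 ?mulr1 ?add0r ?addr0.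
by rewrite dm // !mulr0 addr0.
Qed.

Lemma dot_pair (i j : 'I_n) (v d : 'rV[R]_n) : pair_dir i j d ->
  dotv v d = v 0 i * d 0 i + v 0 j * d 0 j.
Proof.
move=> [ij [s dm]]; rewrite /dotv (@sum_pair R n (fun m => v 0 m * d 0 m) i j ij) //.
by move=> m h1 h2; rewrite dm // mulr0.
Qed.

Lemma sq_pair (i j : 'I_n) (d : 'rV[R]_n) : pair_dir i j d ->
  sq d = d 0 i ^+ 2 + d 0 j ^+ 2.
Proof.
move=> [ij [s dm]]; rewrite /sq (@sum_pair R n (fun m => d 0 m ^+ 2) i j ij) //.
by move=> m h1 h2; rewrite dm // expr0n.
Qed.

Lemma norm2_2 (v : 'rV[R]_2) : norm2 v = Num.sqrt (v 0 ord0 ^+ 2 + v 0 (lift ord0 ord0) ^+ 2).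
Proof. by rewrite /norm2 !big_ord_recl big_ord0 addr0. Qed.

End Descent.
Lemma aux1 {R : realType} (gz1 gz2 gx1 gx2 d1 d2 N nd L c S : R) :
  (gz1 - gx1) * d1 + (gz2 - gx2) * d2 <= N * nd -> N * nd <= L * (c * nd) * nd ->
  S = nd * nd -> d1 * gz1 + d2 * gz2 <= gx1 * d1 + gx2 * d2 + L * c * S.
Proof.
move=> h1 h2 ->; have e : L * (c * nd) * nd = L * c * (nd * nd) by ring.
lra.
Qed.

Lemma subE {R : realType} {m : nat} (A B : 'rV[R]_m) k : (A - B) 0 k = A 0 k - B 0 k.
Proof. by rewrite !mxE. Qed.
Lemma gij0 {R : realType} {n : nat} (f : 'rV[R]_n -> R) (z : 'rV[R]_n) (i j : 'I_n) :
  grad_ij f z i j 0 ord0 = grad f z 0 i.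
Proof. by rewrite /grad_ij mxE. Qed.
Lemma gij1 {R : realType} {n : nat} (f : 'rV[R]_n -> R) (z : 'rV[R]_n) (i j : 'I_n) :
  grad_ij f z i j 0 (lift ord0 ord0) = grad f z 0 j.
Proof. by rewrite /grad_ij mxE. Qed.
Lemma norm2_sub2 {R : realType} (A B : 'rV[R]_2) : norm2 (A - B) =
  Num.sqrt ((A 0 ord0 - B 0 ord0) ^+ 2 + (A 0 (lift ord0 ord0) - B 0 (lift ord0 ord0)) ^+ 2).
Proof. by rewrite norm2_2 !subE. Qed.
Lemma norm2_gij {R : realType} {n : nat} (f : 'rV[R]_n -> R) (z x : 'rV[R]_n) (i j : 'I_n) :
  norm2 (grad_ij f z i j - grad_ij f x i j) =
  Num.sqrt ((grad f z 0 i - grad f x 0 i) ^+ 2 + (grad f z 0 j - grad f x 0 j) ^+ 2).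
Proof.
rewrite norm2_sub2.
have e1 := gij0 f z i j. have e2 := gij0 f x i j.
have e3 := gij1 f z i j. have e4 := gij1 f x i j.
move: e1 e2 e3 e4.
generalize (grad_ij f z i j 0 ord0) (grad_ij f x i j 0 ord0) (grad_ij f z i j 0 (lift ord0 ord0)) (grad_ij f x i j 0 (lift ord0 ord0)).
by move=> ? ? ? ? -> -> -> ->.
Qed.

Section Desc.
Context {R : realType} {n : nat}.

Lemma dfE (f : 'rV[R]_n -> R) (z d : 'rV[R]_n) (i j : 'I_n) : pair_dir i j d ->
  'd f z d = d 0 i * grad f z 0 i + d 0 j * grad f z 0 j.
Proof.
move=> pd; rewrite {1}(pair_decomp _ _ _ pd) linearD !linearZ /= !mxE.
by [].
Qed.

Lemma descent gamma (l u : 'rV[R]_n) (f : 'rV[R]_n -> R) (hf : forall x, differentiable f x)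
  (L : R) (hL : 0 < L)
  (hLip : forall (x d : 'rV[R]_n) (i j : 'I_n),
      feasible gamma l u x -> pair_dir i j d -> feasible gamma l u (x + d) ->
      norm2 (grad_ij f (x + d) i j - grad_ij f x i j) <= L * norm2 d)
  (x d : 'rV[R]_n) (i j : 'I_n) :
  feasible gamma l u x -> pair_dir i j d -> feasible gamma l u (x + d) ->
  f (x + d) <= f x + qmodel f L x d.
Proof.
move=> fx pd fxd.
set S := sq d.
pose psi := fun s : R => f (s *: d + x) - (L / 2 * S) * (s * s).
pose dpsi := fun s : R => 'd f (s *: d + x) d - (L / 2 * S) * (s + s).
have hd : forall s : R, is_derive s 1 psi (dpsi s).
  move=> s; rewrite /psi /dpsi.
  have h1 := line_derive f hf x d s.
  have h2 := is_deriveM (is_derive_id s (1:R)) (is_derive_id s (1:R)).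
  have h3 := is_deriveZ (L / 2 * S) h2.
  have h4 := is_deriveB h1 h3.
  have E : (L / 2 * S) *: (s%:A + s%:A) = L / 2 * S * (s + s) :> R.
    by rewrite [s%:A]mulr1.
  rewrite E in h4; exact: h4.
have cont : {within `[0, 1], continuous psi}.
  by apply: derivable_within_continuous => s _; case: (hd s).
have [c c01 hc] := MVT_segment ler01 (fun s _ => hd s) cont.
move: c01; rewrite in_itv /= => /andP[c0 c1].
have [ij [sij dm]] := pd.
pose z := x + c *: d.
have fz : feasible gamma l u z.
  have := feas_conv gamma l u x (x + d) c fx fxd (ltac:(apply/andP; split => //) : 0 <= c <= 1).
  by rewrite /z addrAC subrr add0r.
have pcd : pair_dir i j (c *: d).
  split => //; split; first by rewrite !mxE -mulrDr sij mulr0.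
  by move=> m h1 h2; rewrite mxE dm // mulr0.
have hL1 := hLip x (c *: d) i j fx pcd fz.
rewrite norm2Z // in hL1.
have key : 'd f (c *: d + x) d <= dotv (grad f x) d + L * c * S.
  have -> : c *: d + x = z by rewrite /z addrC.
  rewrite (dfE f z d i j pd).
 rewrite (dot_pair _ _ _ _ pd).
  have hcs := CS2 (grad f z 0 i - grad f x 0 i) (grad f z 0 j - grad f x 0 j) (d 0 i) (d 0 j).
  rewrite norm2_gij -/z in hL1.
  rewrite -(sq_pair _ _ _ pd) -norm2E in hcs.
  have hn : 0 <= norm2 d by apply: sqrtr_ge0.
  have hS : norm2 d ^+ 2 = S by rewrite norm2_sq.
  set N := Num.sqrt _ in hcs hL1.
  have h := ler_wpM2r hn hL1.
  apply: aux1 hcs h _; by rewrite -hS expr2.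
rewrite /psi /dpsi !scale0r !scale1r !add0r addrC in hc.
rewrite /qmodel norm2_sq -/S.
rewrite mul0r mulr0 mulr1 !subr0 mulr1 [d + x]addrC in hc.
have e : L / 2 * S * (c + c) = L * c * S by field.
lra.
Qed.
End Desc.
Lemma f_lbound {R : realType} {n : nat} gamma (l u : 'rV[R]_n) (f : 'rV[R]_n -> R)
  (hf : forall x, differentiable f x) :
  has_lbound [set f y | y in feasible gamma l u].
Proof.
pose B := [set v : 'rV[R]_n | forall i, `[l 0 i, u 0 i]%classic (v ord0 i)].
have cB : compact B.
  by apply: (@rV_compact _ _ (fun i => `[l 0 i, u 0 i]%classic)) => i; apply: segment_compact.
have cf : {within B, continuous f}.
  apply: continuous_subspaceT => x; exact: differentiable_continuous.
have := compact_bounded (continuous_compact cf cB).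
move=> [M [Mreal HM]].
have HM1 := HM (M + 1) (ltac:(by rewrite ltrDl)).

exists (- (M + 1)) => _ [y fy <-].
have By : B y.
  move=> i; have [_ hb] := fy; have /andP[h1 h2] := hb i.
  by rewrite /= in_itv /= (ord1 ord0); apply/andP; split.
have := HM1 (f y) (ex_intro2 _ _ y By erefl).
rewrite /= ler_norml => /andP[h _]; exact: h.
Qed.
Lemma dotv0 {R : realType} {n : nat} (v : 'rV[R]_n) : dotv v 0 = 0.
Proof. by rewrite /dotv big1 // => m _; rewrite mxE mulr0. Qed.

Lemma norm20 {R : realType} {n : nat} : norm2 (0 : 'rV[R]_n) = 0.
Proof. by rewrite /norm2 big1 ?sqrtr0 // => m _; rewrite mxE expr0n. Qed.

Lemma qmodel0 {R : realType} {n : nat} (f : 'rV[R]_n -> R) L x : qmodel f L x 0 = 0.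
Proof. by rewrite /qmodel dotv0 norm20 expr0n mulr0 addr0. Qed.

Lemma sum_addE {R : realType} {n : nat} (x d : 'rV[R]_n) :
  \sum_m (x + d) 0 m = \sum_m x 0 m + \sum_m d 0 m.
Proof. by rewrite -big_split; apply: eq_bigr => m _; rewrite mxE. Qed.

Lemma sum_subE {R : realType} {n : nat} (x d : 'rV[R]_n) :
  \sum_m (x - d) 0 m = \sum_m x 0 m - \sum_m d 0 m.
Proof. by rewrite -sumrB; apply: eq_bigr => m _; rewrite !mxE. Qed.

Lemma feas_step {R : realType} {n : nat} gamma (l u x y d : 'rV[R]_n) (i j : 'I_n) :
  feasible gamma l u x -> feasible gamma l u y -> pair_dir i j d ->
  (forall m, betw (d 0 m) ((y - x) 0 m)) -> feasible gamma l u (x + d).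
Proof.
move=> [sx bx] [sy byy] [ij [sij dm]] hb; split.
  by rewrite sum_addE sx (sum_pair (fun m => d 0 m) i j ij) ?sij ?addr0 //.
move=> m; have := hb m.
have -> : (x + d) 0 m = x 0 m + d 0 m by rewrite mxE.
have -> : (y - x) 0 m = y 0 m - x 0 m by rewrite !mxE.
have /andP[h1 h2] := bx m; have /andP[h3 h4] := byy m.
by case=> /andP[h5 h6]; apply/andP; split; lra.
Qed.

Lemma rate_step {R : realType} (e e' Q I K L mu : R) :
  0 < K -> 0 < L -> e' <= e + Q -> K * Q <= I -> mu * e <= - L * I ->
  e' <= (1 - mu / (L * K)) * e.
Proof.
move=> K0 L0 h1 h2 h3.
have h4 : L * (K * Q) <= L * I by apply: ler_wpM2l => //; apply: ltW.
have LK0 : 0 < L * K by apply: mulr_gt0.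
have h5 : Q <= (L * K)^-1 * (- mu * e).
  have -> : Q = (L * K)^-1 * (L * K * Q) by field; apply/andP; split; apply: lt0r_neq0.
  apply: ler_wpM2l; first by rewrite invr_ge0 ltW.
  lra.
have -> : (1 - mu / (L * K)) * e = e + (L * K)^-1 * (- mu * e) by rewrite mulrC [_ * (- mu * e)]mulrC; ring.
lra.
Qed.

Theorem mainTheorem11 (R : realType) (n : nat) (hn : (2 <= n)%N)
  (gamma : R) (l u : 'rV[R]_n)
  (hlu : forall m, l 0 m <= u 0 m)
  (hX : feasible gamma l u !=set0)
  (f : 'rV[R]_n -> R) (hf : forall x, differentiable f x)
  (L2 : R) (hL2 : 0 < L2)
  (hLip : forall (x d : 'rV[R]_n) (i j : 'I_n),
      feasible gamma l u x -> pair_dir i j d -> feasible gamma l u (x + d) ->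
      norm2 (grad_ij f (x + d) i j - grad_ij f x i j) <= L2 * norm2 d)
  (mu2 : R) (hmu2 : 0 < mu2)
  (hPL : forall x, feasible gamma l u x ->
      - L2 * inf [set qmodel f L2 x (y - x) | y in feasible gamma l u]
      >= mu2 * (f x - inf [set f y | y in feasible gamma l u]))
  (xs : nat -> 'rV[R]_n)
  (hx0 : feasible gamma l u (xs 0%N))
  (hGSq : forall k : nat, exists i j : 'I_n,
      pair_dir i j (xs k.+1 - xs k) /\ feasible gamma l u (xs k.+1) /\
      forall (i' j' : 'I_n) (d : 'rV[R]_n),
        pair_dir i' j' d -> feasible gamma l u (xs k + d) ->
        qmodel f L2 (xs k) (xs k.+1 - xs k) <= qmodel f L2 (xs k) d) :
  forall k : nat,
    f (xs k) - inf [set f y | y in feasible gamma l u]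
    <= (1 - mu2 / (L2 * (n - 1)%:R)) ^+ k
       * (f (xs 0%N) - inf [set f y | y in feasible gamma l u]).
Proof.
set fs := inf [set f y | y in feasible gamma l u].
set c := mu2 / (L2 * (n - 1)%:R).
have hlb : forall x, feasible gamma l u x -> fs <= f x.
  move=> x fx; apply: ge_inf; first exact: f_lbound.
  by exists x.
have fe : forall k, feasible gamma l u (xs k).
  elim=> // k _; by have [i [j [_ [h _]]]] := hGSq k.
have K0 : 0 < (n - 1)%:R :> R by rewrite ltr0n subn_gt0.
have i0lt : (0 < n)%N by apply: leq_trans hn.
have i1lt : (1 < n)%N by [].
pose i0 := Ordinal i0lt; pose i1 := Ordinal i1lt.
have i01 : i0 != i1 by [].
have rec : forall k, f (xs k.+1) - fs <= (1 - c) * (f (xs k) - fs).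
  move=> k; have [i [j [pd [fy hmin]]]] := hGSq k.
  set x := xs k; set d := xs k.+1 - x.
  have xd : x + d = xs k.+1 by rewrite /d addrC subrK.
  have fx : feasible gamma l u x := fe k.
  have hdesc := descent gamma l u f hf L2 hL2 hLip x d i j fx pd (ltac:(by rewrite xd)).
  rewrite xd in hdesc.
  set Q := qmodel f L2 x d in hdesc hmin.
  have hQ0 : Q <= 0.
    have h0 : pair_dir i0 i1 (0 : 'rV[R]_n).
      by split => //; split; [rewrite !mxE addr0|move=> m _ _; rewrite mxE].
    have h1 : feasible gamma l u (x + 0) by rewrite addr0.
    by have := hmin i0 i1 0 h0 h1; rewrite qmodel0.
  have hall : forall y, feasible gamma l u y -> (n - 1)%:R * Q <= qmodel f L2 x (y - x).
    move=> y fyy.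
    rewrite /qmodel norm2_sq.
    apply: (@decomp R n (grad f x) (y - x) L2 Q) => //.
    - by apply: ltW.
    - move=> i' j' d' pd' hb.
      have := hmin i' j' d' pd' (feas_step gamma l u x y d' i' j' fx fyy pd' hb).
      by rewrite /qmodel norm2_sq.
    - by rewrite subn1 prednK // -[X in leq _ X]card_ord max_card.
    - have [sx _] := fx; have [sy _] := fyy.
      by rewrite sum_subE sx sy subrr.
    - by move=> m; rewrite /betw; case: (leP 0 ((y - x) 0 m)) => h; [left|right]; lra.
  have hinf : (n - 1)%:R * Q <= inf [set qmodel f L2 x (y - x) | y in feasible gamma l u].
    apply: lb_le_inf.
      by case: hX => y hy; exists (qmodel f L2 x (y - x)); exists y.
    by move=> _ [y hy <-]; apply: hall.
  have := hPL x fx.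
  move=> hpl.
  rewrite /c; have := @rate_step R (f x - fs) (f (xs k.+1) - fs) Q _ ((n-1)%:R) L2 mu2 K0 hL2 _ hinf hpl.
  lra.
have eg : forall k, 0 <= f (xs k) - fs by move=> k; rewrite subr_ge0; apply: hlb.
have [hc|hc] := leP 0 (1 - c).
  elim=> [|k IH]; first by rewrite expr0 mul1r.
  apply: le_trans (rec k) _.
  by rewrite exprS -mulrA; apply: ler_wpM2l.
have e00 : f (xs 0%N) - fs = 0.
  have := rec 0%N; have := eg 1%N; have := eg 0%N; nra.
have ek : forall k, f (xs k) - fs = 0.
  elim=> // k IH; have := rec k; rewrite IH mulr0; have := eg k.+1; lra.
by move=> k; rewrite ek e00 mulr0.
Qed.
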